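(* Let $\Sigma$ be a graded alphabet, $t\in T_\Sigma$, and $A_t=(\Sigma,Q,\nu,\delta)$ the subtree automaton of $t$. Then for every tree $r\in\mathrm{SubTree}(t)$, $\Delta(r)=\{r'\in Q\mid\mathrm{h}(r')=r\}$.
   Context: A graded alphabet is a finite set $\Sigma=\bigcup_{k\in\mathbb{N}}\Sigma_k$; $T_\Sigma$ is the set of trees $f(t_1,\ldots,t_k)$ with $f\in\Sigma_k$. A RWTA is $A=(\Sigma,Q,\nu,\delta)$ with $Q$ finite, $\nu:Q\to\mathbb{N}$, $\delta\subseteq\bigcup_k Q\times\Sigma_k\times Q^k$; $\delta(f,q_1,\ldots,q_k)=\{q\mid(q,f,q_1,\ldots,q_k)\in\delta\}$, extended to subsets by union over tuples; $\Delta(f(t_1,\ldots,t_k))=\delta(f,\Delta(t_1),\ldots,\Delta(t_k))$. For $t=f(t_1,\ldots,t_k)$, $\mathrm{SubTree}(t)=\{t\}\cup\bigcup_j\mathrm{SubTree}(t_j)$. The tree $t^\sharp$ is obtained from $t$ by indexing each symbol occurrence with its position in a preorder traversal (indexed symbols are distinct and keep their arity); $\Sigma_{t^\sharp}$ is the set of indexed symbols of $t^\sharp$; $\mathrm{h}$ erases indices (on symbols and trees). The subtree automaton of $t$ is $A_t=(\Sigma,Q,\nu,\delta)$ with $Q=\mathrm{SubTree}(t^\sharp)$, $\nu\equiv1$, and for $f\in\Sigma_{t^\sharp}$ of arity $k$ and $t_1,\ldots,t_{k+1}\in Q$: $t_{k+1}\in\delta(\mathrm{h}(f),t_1,\ldots,t_k)$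 iff $t_{k+1}=f(t_1,\ldots,t_k)$. *)

(* Defs.v *)
From mathcomp Require Import all_boot.
Set Implicit Arguments.
Unset Strict Implicit.
Unset Printing Implicit Defensive.

Inductive tree (L : Type) : Type := Node : L -> list (tree L) -> tree L.
Arguments Node {L} _ _.

(** A graded alphabet: a finite set of symbols with an arity function
    (Sigma_k = symbols of arity k). *)
Record graded_alphabet := GradedAlphabet {
  sym :> finType;
  arity : sym -> nat
}.

Fixpoint ranked (L : Type) (ar : L -> nat) (t : tree L) : Prop :=
  match t with
  | Node f ts =>
      length ts = ar f /\
      (fix R (us : list (tree L)) : Prop :=
         match us with
         | nil => True
         | u :: us' => ranked ar u /\ R us'
         end) ts
  end.

Definition in_TSigma (S : graded_alphabet) (t : tree S) : Prop := ranked (@arity S) t.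

Fixpoint is_subtree (L : Type) (r t : tree L) : Prop :=
  match t with
  | Node f ts =>
      r = t \/
      (fix R (us : list (tree L)) : Prop :=
         match us with
         | nil => False
         | u :: us' => is_subtree r u \/ R us'
         end) ts
  end.

Fixpoint tmap (A B : Type) (g : A -> B) (t : tree A) : tree B :=
  match t with
  | Node a ts =>
      Node (g a)
        ((fix M (us : list (tree A)) : list (tree B) :=
            match us with
            | nil => nil
            | u :: us' => tmap g u :: M us'
            end) ts)
  end.

(** Indexed symbols are pairs (f, i), i = preorder position. *)
Definition erase_sym (S : Type) (x : S * nat) : S := x.1.
Definition erase (S : Type) (t : tree (S * nat)) : tree S := tmap (@erase_sym S) t.

Fixpoint index_from (S : Type) (n : nat) (t : tree S) : tree (S * nat) * nat :=
  match t with
  | Node f ts =>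
      let '(ts', m) :=
        (fix G (k : nat) (us : list (tree S)) : list (tree (S * nat)) * nat :=
           match us with
           | nil => (nil, k)
           | u :: us' =>
               let '(u', k1) := index_from k u in
               let '(us'', k2) := G k1 us' in
               (u' :: us'', k2)
           end) n.+1 ts in
      (Node (f, n) ts', m)
  end.

Definition sharp (S : Type) (t : tree S) : tree (S * nat) := (index_from 1 t).1.

(** Occurrence of a label in a tree (Sigma_{t^#} = labels occurring in t^#). *)
Fixpoint occurs (L : Type) (x : L) (t : tree L) : Prop :=
  match t with
  | Node f ts =>
      x = f \/
      (fix R (us : list (tree L)) : Prop :=
         match us with
         | nil => False
         | u :: us' => occurs x u \/ R us'
         end) ts
  end.

(** Generic RWTA run: Delta(f(t_1..t_k)) = delta(f, Delta(t_1), ..., Delta(t_k)),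
    where delta q f qs means (q, f, q_1, ..., q_k) ∈ delta.  Sets of states are
    predicates on the state type. *)
Fixpoint Delta (L Q : Type) (delta : Q -> L -> list Q -> Prop) (t : tree L) : Q -> Prop :=
  match t with
  | Node f ts =>
      fun q => exists qs : list Q,
        delta q f qs /\
        (fix R (us : list (tree L)) (ps : list Q) : Prop :=
           match us, ps with
           | nil, nil => True
           | u :: us', p :: ps' => Delta delta u p /\ R us' ps'
           | _, _ => False
           end) ts qs
  end.

(** The subtree automaton A_t: states Q = SubTree(t^#) (indexed trees),
    nu = 1 (weights play no role in Delta), and
    t_{k+1} ∈ delta(h(f), t_1..t_k)  iff  f ∈ Sigma_{t^#} of arity k and
    t_{k+1} = f(t_1,..,t_k), with all t_i ∈ Q. *)
Definition subtree_states (S : graded_alphabet) (t : tree S) (q : tree (S * nat)) : Prop :=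
  is_subtree q (sharp t).

Definition subtree_nu (S : graded_alphabet) (t : tree S) (q : tree (S * nat)) : nat := 1.

Definition subtree_delta (S : graded_alphabet) (t : tree S)
    (q : tree (S * nat)) (g : S) (qs : list (tree (S * nat))) : Prop :=
  subtree_states t q /\ (forall i, i < length qs -> subtree_states t (nth (sharp t) qs i)) /\
  exists f : S * nat,
    occurs f (sharp t) /\ arity f.1 = length qs /\
    erase_sym f = g /\ q = Node f qs.

(* Main.v *)
From Stdlib Require Import List.
Require Import Defs.
From mathcomp Require Import all_boot.


Section G.
Variable L : Type.
Lemma tree_rect2 (P : tree L -> Prop) :
  (forall f ts, (forall u, In u ts -> P u) -> P (Node f ts)) -> forall t, P t.
Proof.
move=> H; fix IH 1 => -[f ts]; apply: H.
elim: ts => [|u us IHs] v /= Hv; first by case: Hv.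
case: Hv => [<-|Hv]. exact: IH. exact: IHs.
Qed.

Lemma is_subtree_node (r : tree L) f ts : is_subtree r (Node f ts) <->
  r = Node f ts \/ exists u, In u ts /\ is_subtree r u.
Proof.
simpl; split => -[->|H]; try by left. 
- right; elim: ts H => [|u us IH] //= [H|H]; first by exists u; auto.
  by case: (IH H) => v [? ?]; exists v; auto.
- right; case: H => u [Hu Hs]; elim: ts Hu => [|v us IH] //= [->|H]; [by left | by right; apply: IH].
Qed.

Lemma ranked_node ar f (ts : list (tree L)) : ranked ar (Node f ts) <->
  length ts = ar f /\ forall u, In u ts -> ranked ar u.
Proof.
simpl; split => -[-> H]; split => //.
- elim: ts H => [|u us IH] //= [H1 H2] v [<-|Hv] //; exact: IH.
- elim: ts H => [|u us IH] //= H; split; first by apply: H; left.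
  by apply: IH => w Hw; apply: H; right.
Qed.

Lemma occurs_node x f (ts : list (tree L)) : occurs x (Node f ts) <->
  x = f \/ exists u, In u ts /\ occurs x u.
Proof.
simpl; split => -[->|H]; try by left.
- right; elim: ts H => [|u us IH] //= [H|H]; first by exists u; auto.
  by case: (IH H) => v [? ?]; exists v; auto.
- right; case: H => u [Hu Hs]; elim: ts Hu => [|v us IH] //= [->|H]; [by left | by right; apply: IH].
Qed.

Lemma subtree_refl (t : tree L) : is_subtree t t.
Proof. by case: t => f ts; simpl; left. Qed.

Lemma subtree_trans (x y z : tree L) : is_subtree x y -> is_subtree y z -> is_subtree x z.
Proof.
move=> Hxy; elim/tree_rect2: z => f ts IH /is_subtree_node [E|[u [Hu Hs]]]; first by rewrite -E.
apply/is_subtree_node; right; exists u; split; [exact: Hu | exact: IH].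
Qed.

Lemma ranked_sub ar (q s : tree L) : ranked ar s -> is_subtree q s -> ranked ar q.
Proof.
elim/tree_rect2: s => f ts IH Hr /is_subtree_node [->|[u [Hu Hs]]] //.
move/ranked_node: Hr => [_ H]; exact: (IH u Hu (H u Hu) Hs).
Qed.

Lemma occurs_sub x (qs : list (tree L)) s : is_subtree (Node x qs) s -> occurs x s.
Proof.
elim/tree_rect2: s => f ts IH /is_subtree_node [E|[u [Hu Hs]]].
- case: E => -> _; by apply/occurs_node; left.
- apply/occurs_node; right; exists u; split; [exact: Hu | exact: IH].
Qed.
End G.

Lemma tmap_node A B (g : A -> B) a ts : tmap g (Node a ts) = Node (g a) (map (tmap g) ts).
Proof. simpl; congr Node; by elim: ts => //= u us ->. Qed.

Lemma subtree_tmap {A B} (g : A -> B) {q s} : is_subtree q s -> is_subtree (tmap g q) (tmap g s).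
Proof.
elim/tree_rect2: s => f ts IH /is_subtree_node [->|[u [Hu Hs]]].
- exact: subtree_refl.
- rewrite tmap_node; apply/is_subtree_node; right; exists (tmap g u); split; auto.
  exact: in_map.
Qed.

Section Idx.
Variable S : Type.
Fixpoint idxl (k : nat) (us : list (tree S)) : list (tree (S * nat)) * nat :=
  match us with
  | nil => (nil, k)
  | u :: us' => let '(u', k1) := index_from k u in
                let '(us'', k2) := idxl k1 us' in (u' :: us'', k2)
  end.
End Idx.
Arguments idxl {S}.

Lemma erase_index (S : Type) (t : tree S) : forall n, erase (index_from n t).1 = t.
Proof.
elim/tree_rect2: t => f ts IH n.
change (erase (let '(ts',m) := idxl n.+1 ts in (Node (f,n) ts', m)).1 = Node f ts).
have H : forall k, map (@erase S) (idxl k ts).1 = ts.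
  elim: ts IH {n} => [|u us IHs] IH k //=.
  case E1: (index_from k u) => [u' k1]; case E2: (idxl k1 us) => [us'' k2] /=.
  have := IH u (or_introl erefl) k; rewrite E1 /= => ->.
  by rewrite -(IHs (fun w Hw => IH w (or_intror Hw)) k1) E2.
case E: (idxl n.+1 ts) => [ts' m] /=.
by rewrite /erase tmap_node -/(erase _) /erase_sym /= -{1}(H n.+1) E.
Qed.

Lemma Delta_node L Q (d : Q -> L -> list Q -> Prop) f ts q :
  Delta d (Node f ts) q <-> exists qs, d q f qs /\ Forall2 (Delta d) ts qs.
Proof.
simpl; split => -[qs [Hd H]]; exists qs; split => //.
- elim: ts qs H {Hd} => [|u us IH] [|p ps] //= [H1 H2]; constructor; auto.
- elim: H {Hd} => //= u p us ps H1 H2 IH; split; auto.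
Qed.

Lemma length_map A B (g : A -> B) (l : list A) : length (map g l) = length l.
Proof. by elim: l => //= a l ->. Qed.

Lemma nth_In' A (d : A) (l : list A) i : i < length l -> In (nth d l i) l.
Proof. elim: l i => [|a l IH] [|i] //= H; [by left | right; exact: IH]. Qed.

Theorem lemma7 (S : graded_alphabet) (t : tree S) :
  in_TSigma t ->
  forall r : tree S, is_subtree r t ->
  forall q : tree (S * nat),
    Delta (subtree_delta t) r q <-> (subtree_states t q /\ erase q = r).
Proof.
move=> Ht r _ q; split.
- elim/tree_rect2: r q => f ts IH q /Delta_node [qs [[Hq [Hqs [f' [Ho [Ha [Hf Eq]]]]]] HF]].
  split => //; subst q.
  rewrite /erase tmap_node -/(erase _); rewrite -Hf; congr Node.
  elim: HF IH {Hqs Ha} => //= u p us ps Hup _ IHs IH.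
  have := proj2 (IH u (or_introl erefl) p Hup); rewrite /erase => ->; rewrite IHs //.
  by move=> w Hw; apply: IH; right.
- case=> Hq <-; elim/tree_rect2: q Hq {r} => f qs IH Hq.
  apply/Delta_node; exists qs; split.
  + split => //; split.
    * move=> i Hi; apply: subtree_trans Hq; apply/is_subtree_node; right.
      exists (nth (sharp t) qs i); split; [exact: nth_In' | exact: subtree_refl].
    * exists f; split; first exact: occurs_sub Hq.
      split; last by [].
      have Hr : ranked (@arity S) (erase (Node f qs)).
        apply: (@ranked_sub _ _ _ t) => //.
        have := subtree_tmap (@erase_sym S) Hq; rewrite -/(erase _) -/(erase _).
        by rewrite /sharp erase_index.
      move: Hr; rewrite /erase tmap_node => /ranked_node [+ _].
      by rewrite length_map.
  + have Hc : forall p, In p qs -> subtree_states t p.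
      move=> p Hp; apply: subtree_trans Hq; apply/is_subtree_node; right.
      by exists p; split => //; exact: subtree_refl.
    elim: qs IH Hc {Hq} => [|p ps IHs] IH Hc /=; first by constructor.
    constructor; first by apply: IH; [left | apply: Hc; left].
    apply: IHs => [w Hw|w Hw]; [apply: IH; right | apply: Hc; right]; done.
Qed.
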